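(* If every tree is graceful, then every tree is supergraceful.
   Context: A graceful labeling of a graph with $q$ edges is an injective map $\varphi: V \to \{0,\dots,q\}$ whose induced edge labels $|\varphi(u)-\varphi(v)|$, $uv\in E$, are pairwise distinct. For a graph with $p$ nodes and $q$ edges, a total labeling is a map $\varphi: V \to \{1,\dots,p+q\}$ such that the $p$ node labels and the $q$ edge labels $|\varphi(u)-\varphi(v)|$ are all pairwise distinct, together forming exactly $\{1,\dots,p+q\}$; a graph is supergraceful if it admits a total labeling. *)

(* Defs.v *)
From mathcomp Require Import all_boot.
Set Implicit Arguments. Unset Strict Implicit. Unset Printing Implicit Defensive.

Definition simple_graph (T : finType) (e : rel T) : Prop :=
  symmetric e /\ irreflexive e.

Definition edges (T : finType) (e : rel T) : {set {set T}} :=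
  [set [set p.1; p.2] | p : T * T & e p.1 p.2].

Definition nnodes (T : finType) : nat := #|T|.
Definition nedges (T : finType) (e : rel T) : nat := #|edges e|.

Definition absd (m n : nat) : nat := maxn m n - minn m n.

Definition is_tree (T : finType) (e : rel T) : Prop :=
  [/\ simple_graph e,
      0 < #|T|,
      (forall x y : T, connect e x y) &
      (forall c : seq T, 3 <= size c -> ~ ucycle e c)].

Definition graceful_labeling (T : finType) (e : rel T) (phi : T -> nat) : Prop :=
  [/\ injective phi,
      (forall v, phi v <= nedges e) &
      (forall u v u' v', e u v -> e u' v' ->
         absd (phi u) (phi v) = absd (phi u') (phi v') ->
         [set u; v] = [set u'; v'])].

Definition graceful (T : finType) (e : rel T) : Prop :=
  exists phi : T -> nat, graceful_labeling e phi.

Definition total_labeling (T : finType) (e : rel T) (phi : T -> nat) : Prop :=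
  let N := nnodes T + nedges e in
  [/\ injective phi,
      (forall u v u' v', e u v -> e u' v' ->
         absd (phi u) (phi v) = absd (phi u') (phi v') ->
         [set u; v] = [set u'; v']),
      (forall w u v, e u v -> phi w <> absd (phi u) (phi v)),
      ((forall v, 1 <= phi v <= N) /\
       (forall u v, e u v -> 1 <= absd (phi u) (phi v) <= N)) &
      (forall k, 1 <= k <= N ->
         (exists w, phi w = k) \/ (exists u v, e u v /\ absd (phi u) (phi v) = k))].

Definition supergraceful (T : finType) (e : rel T) : Prop :=
  exists phi : T -> nat, total_labeling e phi.

(* Main.v *)
Require Import Defs.
From mathcomp Require Import all_boot.
From mathcomp Require Import zify.

Set Implicit Arguments. Unset Strict Implicit.

Definition eminus (T : finType) (e : rel T) (E : {set T}) : rel T :=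
  fun x y => e x y && ([set x; y] != E).

Lemma edges_mem (T : finType) (e : rel T) E :
  E \in edges e -> exists u v, e u v /\ E = [set u; v].
Proof.
by case/imsetP => [[u v]]; rewrite inE /= => huv ->; exists u, v.
Qed.

Lemma mem_edges (T : finType) (e : rel T) u v : e u v -> [set u; v] \in edges e.
Proof. by move=> h; apply/imsetP; exists (u, v); rewrite ?inE. Qed.

Lemma path_avoid (T : finType) (e : rel T) (E : {set T}) v :
  v \in E -> forall a q, path e a q -> v \notin a :: q -> path (eminus e E) a q.
Proof.
move=> vE a q; elim: q a => [|b q IH] a //=.
case/andP=> eab pq; rewrite !inE negb_or => /andP[va]; rewrite negb_or => /andP[vb vq].
rewrite IH ?inE ?negb_or ?vb ?vq // andbT /eminus eab /=.
apply/eqP=> hE; move: vE; rewrite -hE !inE; by rewrite (negbTE va) (negbTE vb).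
Qed.

Lemma eminus_sym (T : finType) (e : rel T) E : symmetric e -> symmetric (eminus e E).
Proof. by move=> se x y; rewrite /eminus se setUC. Qed.

Lemma acyclic_card (T : finType) (e : rel T) :
  simple_graph e -> (forall x y, connect e x y) ->
  (forall c : seq T, 3 <= size c -> ~ ucycle e c) ->
  forall r : T, #|edges e| <= #|T|.-1.
Proof.
move=> [se ie] conn acyc r.
pose f := fun E : {set T} => odflt r [pick v in E | ~~ connect (eminus e E) v r].
have C1 : forall E, E \in edges e -> f E \in E /\ ~~ connect (eminus e E) (f E) r.
  move=> E /edges_mem [u [v [euv ->]]]; rewrite /f; case: pickP => [w /andP[h1 h2] | none] //=.
  exfalso.
  have hu := none u; have hv := none v.
  rewrite !inE eqxx /= in hu; rewrite !inE eqxx orbT /= in hv.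
  move/negbFE: hu => hu; move/negbFE: hv => hv.
  have symc := sym_connect_sym (eminus_sym [set u; v] se).
  have : connect (eminus e [set u; v]) u v by apply: connect_trans hu _; rewrite symc.
  case/connectP => p pp lp.
  move: lp; case: (shortenP pp) => p' pp' up' _ lp {pp p}.
  case: p' pp' up' lp => [|y [|z p'']].
  - move=> _ _ /= uv; by rewrite uv ie in euv.
  - by move=> /= /andP[]; rewrite /eminus => /andP[] _; move=> + _ _ yv; rewrite -yv eqxx.
  - move=> pp up lp; apply: (acyc (u :: y :: z :: p'')) => //.
    rewrite /ucycle; apply/andP; split=> //; rewrite /cycle rcons_path.
    rewrite (sub_path _ pp) /=; last by move=> a b /andP[].
    by move: lp => /= <-; rewrite se.
have C2 : forall E v x p, E \in edges e -> v \in E -> E != [set v; x] ->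
    path e v (x :: p) -> uniq (v :: x :: p) -> r = last v (x :: p) ->
    connect (eminus e E) v r.
  move=> E v x p _ vE ne pp up lr; apply/connectP; exists (x :: p) => //.
  move: pp up => /= /andP[evx pp] /andP[vn _].
  rewrite /eminus evx /= eq_sym ne /=.
  by apply: (path_avoid vE pp).
have inj : {in edges e &, injective f}.
  move=> E1 E2 h1 h2 feq; apply/eqP; apply/negP => /negP ne.
  have [i1 n1] := C1 _ h1; have [i2 n2] := C1 _ h2.
  rewrite feq in i1 n1; set v := f E2 in i1 i2 n1 n2.
  case/connectP: (conn v r) => p pp lp.
  move: lp; case: (shortenP pp) => p' pp' up' _ lp {pp p}.
  case: p' pp' up' lp => [|x p] pp up lp.
    by move: n1; rewrite lp connect0.
  case: (eqVneq E1 [set v; x]) => [e1|ne1]; last first.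
    by move: n1; rewrite (C2 E1 v x p).
  case: (eqVneq E2 [set v; x]) => [e2|ne2]; last first.
    by move: n2; rewrite (C2 E2 v x p).
  by move: ne; rewrite e1 e2 eqxx.
rewrite -(card_in_imset inj) -(cardsC1 r); apply: subset_leq_card.
apply/subsetP => w /imsetP [E hE ->]; rewrite !inE; apply/eqP => fr.
by have [_] := C1 _ hE; rewrite fr connect0.
Qed.

Lemma absd_sym m n : absd m n = absd n m.
Proof. rewrite /absd; lia. Qed.

Lemma absd_odd m n : absd m.*2.+1 n.*2.+1 = (absd m n).*2.
Proof. rewrite /absd; lia. Qed.

Theorem theorem7p9 :
  (forall (T : finType) (e : rel T), is_tree e -> graceful e) ->
  forall (T : finType) (e : rel T), is_tree e -> supergraceful e.
Proof.
move=> H T e tr; have [phi [inj bnd gr]] := H T e tr.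
case: tr => [[se ie] T0 conn acyc].
have [r _] := card_gt0P T0.
set q := nedges e.
have Hq : q <= #|T|.-1 by apply: (acyclic_card (conj se ie) conn acyc r).
pose s1 := map phi (enum T).
have u1 : uniq s1 by rewrite map_inj_uniq // enum_uniq.
have sub1 : {subset s1 <= iota 0 q.+1}.
  by move=> k /mapP [v _ ->]; rewrite mem_iota /= add0n ltnS bnd.
have sz1 : size s1 = #|T| by rewrite size_map -cardE.
have Hp : #|T| = q.+1.
  have := uniq_leq_size u1 sub1; rewrite sz1 size_iota; lia.
have hs1 : size (iota 0 q.+1) <= size s1 by rewrite size_iota sz1 Hp.
have [_ eq1] := uniq_min_size u1 sub1 hs1.
pose ends := fun E : {set T} => [pick p : T * T | e p.1 p.2 && ([set p.1; p.2] == E)].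
have endsP : forall E, E \in edges e -> exists p, ends E = Some p /\ e p.1 p.2 /\ [set p.1; p.2] = E.
  move=> E /edges_mem [u [v [euv ->]]]; rewrite /ends; case: pickP => [p /andP[h1 /eqP h2]|none].
    by exists p.
  by have := none (u, v); rewrite /= euv eqxx.
pose lab := fun E => if ends E is Some p then absd (phi p.1) (phi p.2) else 0.
have labneq : forall u v, e u v -> 1 <= absd (phi u) (phi v) <= q.
  move=> u v euv; have nuv : phi u != phi v.
    by apply/eqP => /inj uv; rewrite uv ie in euv.
  have := bnd u; have := bnd v; move: nuv; rewrite /absd; lia.
pose s3 := map lab (enum (edges e)).
have u3 : uniq s3.
  rewrite map_inj_in_uniq ?enum_uniq // => E1 E2; rewrite !mem_enum => h1 h2.
  have [p1 [en1 [e1 s1']]] := endsP _ h1; have [p2 [en2 [e2 s2']]] := endsP _ h2.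
  rewrite /lab en1 en2 => l; rewrite -s1' -s2'; exact: gr e1 e2 l.
have sub3 : {subset s3 <= iota 1 q}.
  move=> k /mapP [E]; rewrite mem_enum => hE ->.
  have [p1 [en1 [e1 _]]] := endsP _ hE; rewrite /lab en1 mem_iota.
  have := labneq _ _ e1; lia.
have hs3 : size (iota 1 q) <= size s3 by rewrite size_iota size_map -cardE.
have [_ eq3] := uniq_min_size u3 sub3 hs3.
exists (fun v => (phi v).*2.+1); split.
- by move=> x y /= [] /double_inj; apply: inj.
- move=> u v u' v' h h' /=; rewrite !absd_odd => /eqP; rewrite (inj_eq double_inj) => /eqP.
  exact: gr.
- move=> w u v _ /=; rewrite absd_odd => /(congr1 odd); by rewrite /= !odd_double.
- rewrite /nnodes -/q Hp; split.
    by move=> v /=; have := bnd v; lia.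
  by move=> u v euv; rewrite absd_odd; have := labneq _ _ euv; lia.
- rewrite /nnodes -/q Hp => k hk.
  have := odd_double_half k; case: (odd k) => /= hk2.
    left; have : k./2 \in s1 by rewrite eq1 mem_iota; lia.
    by case/mapP => v _ hv; exists v; rewrite -hv.
  right; have : k./2 \in s3 by rewrite eq3 mem_iota; lia.
  case/mapP => E; rewrite mem_enum => hE hl.
  have [p1 [en1 [e1 _]]] := endsP _ hE; move: hl; rewrite /lab en1 => hl.
  by exists p1.1, p1.2; rewrite absd_odd -hl.
Qed.
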